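(* Let $n\ge1$, $0<\hat\theta<1$ with $n\hat\theta$ an integer, and $\alpha>0$ with $\alpha\le n\hat\theta^2(1-\hat\theta)^2/8$. Then there is a solution $\gamma_\alpha>0$ of $-\log P_{\mathrm{CH},n}\big(\hat\theta\,\big|\,\varphi(\gamma_\alpha,\hat\theta)\big)=\alpha$ satisfying $$\gamma_\alpha\in\sqrt{2\alpha}\left(1+\frac52\frac{\sqrt\alpha}{\sqrt{n\hat\theta(1-\hat\theta)}}[-1,1]\right)^{-1/2},$$ i.e. $\sqrt{2\alpha}\,(1+\epsilon)^{-1/2}\le\gamma_\alpha\le\sqrt{2\alpha}\,(1-\epsilon)^{-1/2}$ with $\epsilon=\frac52\sqrt\alpha/\sqrt{n\hat\theta(1-\hat\theta)}$.
   Context: Logarithms are natural. $P_{\mathrm{CH},n}(t|\varphi)=\left(\frac{\varphi}{t}\right)^{nt}\left(\frac{1-\varphi}{1-t}\right)^{n(1-t)}$ if $t\ge\varphi$, and $=1$ otherwise. With $\hat\sigma=\sqrt{\hat\theta(1-\hat\theta)/n}$, $\varphi(\gamma,\hat\theta)=\hat\theta-\hat\sigma\gamma$. *)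

(* Defs.v *)
From Stdlib Require Import Reals.
Open Scope R_scope.

Definition P_CH (n : nat) (t phi : R) : R :=
  if Rle_dec phi t then
    Rpower (phi / t) (INR n * t) * Rpower ((1 - phi) / (1 - t)) (INR n * (1 - t))
  else 1.

Definition sigma_hat (n : nat) (theta : R) : R := sqrt (theta * (1 - theta) / INR n).

Definition varphi (n : nat) (gamma theta : R) : R := theta - sigma_hat n theta * gamma.

(* Main.v *)
Require Import Defs.
From Stdlib Require Import Reals Lra Psatz Ranalysis5.
From Coquelicot Require Import Coquelicot.
Open Scope R_scope.

Definition gK (t x : R) : R :=
  - (t * ln ((t - x) / t) + (1 - t) * ln ((1 - t + x) / (1 - t))).

Lemma gK_cont t x : 0 < t < 1 -> 0 <= x < t -> continuity_pt (gK t) x.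
Proof.
  intros Ht Hx. apply continuity_pt_filterlim.
  apply (ex_derive_continuous (V := R_NormedModule)).
  unfold gK. auto_derive. repeat split; apply Rdiv_lt_0_compat; lra.
Qed.

Lemma gK0 t : 0 < t < 1 -> gK t 0 = 0.
Proof. intros. unfold gK. rewrite Rminus_0_r, Rplus_0_r, !Rdiv_diag by lra.
  rewrite ln_1. ring. Qed.

Lemma gK_upper t x : 0 < t < 1 -> 0 <= x < t ->
  gK t x <= x^2 / (2 * (1 - t) * (t - x)).
Proof.
  intros Ht Hx.
  set (h := fun y => y^2 / (2 * (1 - t) * (t - y)) - gK t y).
  assert (Hh: forall y, 0 <= y <= x -> continuity_pt h y).
  { intros y Hy. apply continuity_pt_filterlim.
    apply (@ex_derive_continuous R_AbsRing R_NormedModule h). unfold h, gK. auto_derive.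
    repeat split; try apply Rdiv_lt_0_compat; try lra.
    apply Rgt_not_eq. apply Rmult_lt_0_compat; lra. }
  destruct (MVT_gen h 0 x (fun c => c^2 * (1 + t - c) / (2 * (1 - t) * (t - c)^2 * (1 - t + c))))
    as [c [Hc Heq]].
  - rewrite Rmin_left, Rmax_right by lra. intros y Hy.
    unfold h, gK. auto_derive.
    + repeat split; try apply Rdiv_lt_0_compat; try lra.
      apply Rgt_not_eq. apply Rmult_lt_0_compat; lra.
    + field. repeat split; lra.
  - rewrite Rmin_left, Rmax_right by lra. intros; apply Hh; lra.
  - rewrite Rmin_left, Rmax_right in Hc by lra.
    assert (h 0 = 0). { unfold h. rewrite gK0 by lra. field. lra. }
    assert (0 <= c^2 * (1 + t - c) / (2 * (1 - t) * (t - c)^2 * (1 - t + c))).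
    { apply Rmult_le_pos. apply Rmult_le_pos. nra. lra.
      apply Rlt_le, Rinv_0_lt_compat. apply Rmult_lt_0_compat; [|lra].
      apply Rmult_lt_0_compat; [lra|]. nra. }
    assert (0 <= h x) by nra. unfold h in *. lra.
Qed.

Lemma gK_lower t x : 0 < t < 1 -> 0 <= x < t ->
  x^2 / (2 * t * (1 - t + x)) <= gK t x.
Proof.
  intros Ht Hx.
  set (h := fun y => gK t y - y^2 / (2 * t * (1 - t + y))).
  assert (Hh: forall y, 0 <= y <= x -> continuity_pt h y).
  { intros y Hy. apply continuity_pt_filterlim.
    apply (@ex_derive_continuous R_AbsRing R_NormedModule h). unfold h, gK. auto_derive.
    repeat split; try apply Rdiv_lt_0_compat; try lra.
    apply Rgt_not_eq. apply Rmult_lt_0_compat; lra. }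
  destruct (MVT_gen h 0 x (fun c => c^2 * (2 - t + c) / (2 * t * (t - c) * (1 - t + c)^2)))
    as [c [Hc Heq]].
  - rewrite Rmin_left, Rmax_right by lra. intros y Hy.
    unfold h, gK. auto_derive.
    + repeat split; try apply Rdiv_lt_0_compat; try lra.
      apply Rgt_not_eq. apply Rmult_lt_0_compat; lra.
    + field. repeat split; lra.
  - rewrite Rmin_left, Rmax_right by lra. intros; apply Hh; lra.
  - rewrite Rmin_left, Rmax_right in Hc by lra.
    assert (h 0 = 0). { unfold h. rewrite gK0 by lra. field. lra. }
    assert (0 <= c^2 * (2 - t + c) / (2 * t * (t - c) * (1 - t + c)^2)).
    { apply Rmult_le_pos. apply Rmult_le_pos. nra. lra.
      apply Rlt_le, Rinv_0_lt_compat. apply Rmult_lt_0_compat; [|nra].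
      apply Rmult_lt_0_compat; lra. }
    assert (0 <= h x) by nra. unfold h in *. lra.
Qed.

Lemma div_le_l D x a : 0 < D -> x <= a * D -> x / D <= a.
Proof. intros HD H. unfold Rdiv. apply Rmult_le_reg_r with D; [lra|].
  rewrite Rmult_assoc, Rinv_l by lra. lra. Qed.

Lemma div_le_r D x a : 0 < D -> a * D <= x -> a <= x / D.
Proof. intros HD H. unfold Rdiv. apply Rmult_le_reg_r with D; [lra|].
  rewrite Rmult_assoc, Rinv_l by lra. lra. Qed.

Lemma sq_le p q : 0 <= q -> p^2 <= q^2 -> p <= q.
Proof. intros. nra. Qed.

Lemma lnP_eq n t g : 0 < t < 1 -> 0 <= sigma_hat n t * g ->
  - ln (P_CH n t (varphi n g t)) = INR n * gK t (sigma_hat n t * g).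
Proof.
  intros Ht Hg. unfold P_CH, varphi.
  destruct (Rle_dec (t - sigma_hat n t * g) t) as [H|H]; [|lra].
  unfold Rpower. rewrite <- exp_plus, ln_exp. unfold gK.
  replace (1 - (t - sigma_hat n t * g)) with (1 - t + sigma_hat n t * g) by ring.
  ring.
Qed.

Theorem mainTheorem11 (n : nat) (theta alpha : R) :
  (1 <= n)%nat ->
  0 < theta < 1 ->
  (exists k : nat, INR n * theta = INR k) ->
  0 < alpha ->
  alpha <= INR n * theta ^ 2 * (1 - theta) ^ 2 / 8 ->
  let eps := 5 / 2 * sqrt alpha / sqrt (INR n * theta * (1 - theta)) in
  exists gamma : R,
    0 < gamma /\
    - ln (P_CH n theta (varphi n gamma theta)) = alpha /\
    sqrt (2 * alpha) * / sqrt (1 + eps) <= gamma /\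
    gamma <= sqrt (2 * alpha) * / sqrt (1 - eps).
Proof.
  intros Hn Ht _ Ha Hal eps.
  set (N := INR n).
  assert (HN : 1 <= N). { unfold N. apply (le_INR 1). exact Hn. }
  set (P := N * theta * (1 - theta)).
  assert (HP : 0 < P). { unfold P. apply Rmult_lt_0_compat; [|lra]. nra. }
  assert (Hsa : 0 < sqrt alpha) by (apply sqrt_lt_R0; lra).
  assert (HsP : 0 < sqrt P) by (apply sqrt_lt_R0; lra).
  assert (Heps0 : 0 < eps).
  { unfold eps. apply Rdiv_lt_0_compat; [|exact HsP]. lra. }
  assert (E1 : eps ^ 2 * P = 25 / 4 * alpha).
  { unfold eps. change (INR n * theta * (1 - theta)) with P.
    replace ((5 / 2 * sqrt alpha / sqrt P) ^ 2 * P) with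
      (25/4 * (sqrt alpha * sqrt alpha) * (P / (sqrt P * sqrt P))) by (field; lra).
    rewrite !sqrt_sqrt by lra. field. lra. }
  assert (Heps1 : eps ^ 2 <= 25 / 128).
  { assert (alpha <= P * (theta * (1 - theta)) / 8).
    { assert (EP : P * (theta * (1 - theta)) / 8 = INR n * theta ^ 2 * (1 - theta) ^ 2 / 8).
      { unfold P, N. field. }
      rewrite EP. exact Hal. }
    assert (eps^2 * P <= 25/32 * theta * (1 - theta) * P) by nra.
    assert (eps^2 <= 25/32 * theta * (1 - theta)).
    { apply Rmult_le_reg_r with P; lra. }
    assert (0 <= (theta - 1/2)^2) by apply pow2_ge_0. nra. }
  assert (Heps : eps < 1/2) by nra.
  set (sg := sigma_hat n theta).
  assert (E2 : sg ^ 2 * N = theta * (1 - theta)).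
  { unfold sg, sigma_hat. fold N. simpl. rewrite Rmult_1_r, sqrt_sqrt.
    field. lra. apply Rlt_le, Rdiv_lt_0_compat; nra. }
  assert (Hsg : 0 < sg).
  { unfold sg, sigma_hat. apply sqrt_lt_R0. apply Rdiv_lt_0_compat; fold N; nra. }
  set (a := sqrt (2 * alpha) * / sqrt (1 + eps)).
  set (b := sqrt (2 * alpha) * / sqrt (1 - eps)).
  assert (H2a : 0 < sqrt (2 * alpha)) by (apply sqrt_lt_R0; lra).
  assert (Hpe : 0 < sqrt (1 + eps)) by (apply sqrt_lt_R0; lra).
  assert (Hme : 0 < sqrt (1 - eps)) by (apply sqrt_lt_R0; lra).
  assert (Ha0 : 0 < a) by (unfold a; apply Rmult_lt_0_compat; [lra|apply Rinv_0_lt_compat; lra]).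
  assert (Hb0 : 0 < b) by (unfold b; apply Rmult_lt_0_compat; [lra|apply Rinv_0_lt_compat; lra]).
  assert (E3 : a ^ 2 * (1 + eps) = 2 * alpha).
  { unfold a. replace ((sqrt (2 * alpha) * / sqrt (1 + eps)) ^ 2 * (1 + eps))
      with ((sqrt (2 * alpha) * sqrt (2 * alpha)) * ((1+eps) / (sqrt (1 + eps) * sqrt (1 + eps)))) by (field; lra).
    rewrite !sqrt_sqrt by lra. field. lra. }
  assert (E4 : b ^ 2 * (1 - eps) = 2 * alpha).
  { unfold b. replace ((sqrt (2 * alpha) * / sqrt (1 - eps)) ^ 2 * (1 - eps))
      with ((sqrt (2 * alpha) * sqrt (2 * alpha)) * ((1-eps) / (sqrt (1 - eps) * sqrt (1 - eps)))) by (field; lra).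
    rewrite !sqrt_sqrt by lra. field. lra. }
  assert (Hab : a < b).
  { apply Rnot_le_lt. intro Hba. assert (b^2 <= a^2) by nra. nra. }
  assert (HA : sg * a * (1 + eps) <= eps * theta).
  { apply sq_le; [nra|].
    apply Rmult_le_reg_r with (N * (1 - theta)); [nra|].
    replace ((sg * a * (1 + eps)) ^ 2 * (N * (1 - theta))) with
      ((sg^2 * N) * (a^2 * (1 + eps)) * ((1 + eps) * (1 - theta))) by ring.
    replace ((eps * theta) ^ 2 * (N * (1 - theta))) with ((eps^2 * P) * theta)
      by (unfold P; ring).
    rewrite E1, E2, E3.
    assert (0 <= (1-theta)^2 * (1+eps) <= 3/2).
    { assert (0 <= (1-theta)^2 <= 1) by (split; nra).
      split. apply Rmult_le_pos; lra.
      apply Rle_trans with (1 * (3/2)); [apply Rmult_le_compat; lra|lra]. }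
    replace (theta * (1 - theta) * (2 * alpha) * ((1 + eps) * (1 - theta))) with
      ((2 * alpha * theta) * ((1 - theta)^2 * (1 + eps))) by ring.
    assert (0 < alpha * theta) by (apply Rmult_lt_0_compat; lra).
    apply Rle_trans with ((2 * alpha * theta) * (3/2));
      [apply Rmult_le_compat_l; [lra|lra]|lra]. }
  assert (HB : sg * b * (1 - eps) <= eps * (1 - theta)).
  { apply sq_le; [nra|].
    apply Rmult_le_reg_r with (N * theta); [nra|].
    replace ((sg * b * (1 - eps)) ^ 2 * (N * theta)) with
      ((sg^2 * N) * (b^2 * (1 - eps)) * ((1 - eps) * theta)) by ring.
    replace ((eps * (1 - theta)) ^ 2 * (N * theta)) with ((eps^2 * P) * (1 - theta))
      by (unfold P; ring).
    rewrite E1, E2, E4.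
    assert (0 <= theta^2 * (1-eps) <= 1).
    { assert (0 <= theta^2 <= 1) by (split; nra).
      split. apply Rmult_le_pos; lra.
      apply Rle_trans with (1 * 1); [apply Rmult_le_compat; lra|lra]. }
    replace (theta * (1 - theta) * (2 * alpha) * ((1 - eps) * theta)) with
      ((2 * alpha * (1 - theta)) * (theta^2 * (1 - eps))) by ring.
    assert (0 < alpha * (1 - theta)) by (apply Rmult_lt_0_compat; lra).
    apply Rle_trans with ((2 * alpha * (1 - theta)) * 1);
      [apply Rmult_le_compat_l; [lra|lra]|lra]. }
  assert (HC : sg * b < theta).
  { apply Rnot_le_lt. intro Hc.
    assert (Hc2 : theta^2 <= (sg*b)^2).
    { apply pow_incr. lra. }
    assert (E5 : (sg * b)^2 * (1 - eps) * N = theta * (1 - theta) * (2 * alpha)).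
    { replace ((sg * b)^2 * (1 - eps) * N) with ((sg^2*N) * (b^2 * (1-eps))) by ring.
      rewrite E2, E4. ring. }
    assert (H2a' : 2 * alpha <= N * theta^2 * (1 - theta)^2 / 4) by (unfold N; lra).
    assert (Hv : 0 <= theta * (1 - theta)) by (apply Rmult_le_pos; lra).
    assert (X1 : (sg * b)^2 * (1 - eps) * N <= theta^3 * (1 - theta)^3 / 4 * N).
    { rewrite E5. apply Rle_trans with (theta * (1 - theta) * (N * theta^2 * (1 - theta)^2 / 4)).
      apply Rmult_le_compat_l; lra. right; field. }
    assert (X2 : (sg * b)^2 * (1 - eps) <= theta^3 * (1 - theta)^3 / 4).
    { apply Rmult_le_reg_r with N; lra. }
    assert (Ht2 : 0 < theta^2) by (apply pow_lt; lra).
    assert (X3 : theta^2 * (1/2) <= (sg * b)^2 * (1 - eps)).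
    { apply Rle_trans with (theta^2 * (1 - eps)).
      apply Rmult_le_compat_l; lra. apply Rmult_le_compat_r; lra. }
    assert (X4 : theta * (1 - theta)^3 <= 1).
    { assert (U2 : 0 <= (1 - theta)^2 <= 1).
      { split. apply pow2_ge_0. simpl. rewrite Rmult_1_r.
        apply Rle_trans with (1 * 1); [apply Rmult_le_compat; lra|lra]. }
      assert (U3 : 0 <= (1 - theta)^3 <= 1).
      { replace ((1 - theta)^3) with ((1 - theta) * (1 - theta)^2) by ring.
        split. apply Rmult_le_pos; lra.
        apply Rle_trans with (1 * 1); [apply Rmult_le_compat; lra|lra]. }
      apply Rle_trans with (1 * 1); [apply Rmult_le_compat; lra|lra]. }
    assert (theta^3 * (1 - theta)^3 / 4 = theta^2 * (theta * (1 - theta)^3 / 4)) by field.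
    assert (theta^2 * (theta * (1 - theta)^3 / 4) <= theta^2 * (1/4)).
    { apply Rmult_le_compat_l; lra. }
    lra. }
  assert (HxA : 0 <= sg * a < theta) by nra.
  assert (HxB : 0 <= sg * b < theta) by nra.
  assert (Fa : N * gK theta (sg * a) <= alpha).
  { eapply Rle_trans. apply Rmult_le_compat_l; [lra|]. apply gK_upper; lra.
    replace (N * ((sg * a) ^ 2 / (2 * (1 - theta) * (theta - sg * a)))) with
      ((sg^2 * N) * a^2 / (2 * (1 - theta) * (theta - sg * a))) by (field; lra).
    rewrite E2. apply div_le_l. nra.
    replace (alpha * (2 * (1 - theta) * (theta - sg * a))) with
      ((a^2 * (1 + eps)) * ((1 - theta) * (theta - sg * a))) by (rewrite E3; ring).
    assert (0 <= a^2 * (1 - theta)) by nra.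
    nra. }
  assert (Fb : alpha <= N * gK theta (sg * b)).
  { eapply Rle_trans. 2:{ apply Rmult_le_compat_l; [lra|]. apply gK_lower; lra. }
    replace (N * ((sg * b) ^ 2 / (2 * theta * (1 - theta + sg * b)))) with
      ((sg^2 * N) * b^2 / (2 * theta * (1 - theta + sg * b))) by (field; lra).
    rewrite E2. apply div_le_r. nra.
    replace (alpha * (2 * theta * (1 - theta + sg * b))) with
      ((b^2 * (1 - eps)) * (theta * (1 - theta + sg * b))) by (rewrite E4; ring).
    assert (0 <= b^2 * theta) by nra.
    nra. }
  set (F := fun g => N * gK theta (sg * g) - alpha).
  assert (HF : exists g, a <= g <= b /\ F g = 0).
  { destruct (Req_dec (F a) 0) as [Ea|Ea]. { exists a. split; [lra|exact Ea]. }
    destruct (Req_dec (F b) 0) as [Eb|Eb]. { exists b. split; [lra|exact Eb]. }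
    destruct (IVT_interv F a b) as [z [Hz Fz]].
    - intros y Hy. apply continuity_pt_filterlim.
      apply (@ex_derive_continuous R_AbsRing R_NormedModule F).
      unfold F, gK. auto_derive.
      assert (0 <= sg * y <= sg * b) by (split; nra).
      repeat split; apply Rdiv_lt_0_compat; lra.
    - exact Hab.
    - unfold F in *. lra.
    - unfold F in *. lra.
    - exists z. split; [exact Hz|exact Fz]. }
  destruct HF as [g [Hg Fg]].
  exists g. split; [lra|]. split.
  - rewrite lnP_eq; [|lra|fold sg; apply Rmult_le_pos; lra]. fold N. fold sg. unfold F in Fg. lra.
  - fold a b. lra.
Qed.
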